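(* For any (reachable) CCSK process $X$ and any $e_1,e_2\in\mathrm{ev}(X)$: $e_1\le e_2$ if and only if $\mathrm{key}(e_1)\le_X\mathrm{key}(e_2)$.
   Context: Names $\mathsf N$ with bijection $\overline\cdot$ onto disjoint co-names; $\mathsf L=\mathsf N\cup\overline{\mathsf N}\cup\{\tau\}$ ($\alpha$ over $\mathsf L$, $\lambda$ over $\mathsf L\setminus\{\tau\}$); keys $\mathsf K$ denumerable. CCSK processes $X::=\mathbf 0\mid\alpha.X\mid X\backslash\lambda\mid X+Y\mid X|Y\mid\alpha[k].X$; $\mathrm{keys}(X)$ keys in $X$; standard means no keys. Directions $D\in\{\mathrm L,\mathrm R\}$, $\bar{\mathrm L}=\mathrm R$, $\bar{\mathrm R}=\mathrm L$. Proof keyed labels $\theta::=\upsilon\alpha[k]\mid\upsilon\langle\upsilon_1\lambda[k],\upsilon_2\overline\lambda[k]\rangle$ ($\upsilon,\upsilon_i\in\{|_{\mathrm L},|_{\mathrm R},+_{\mathrm L},+_{\mathrm R}\}^*$), $\ell(\upsilon\alpha[k])=\alpha$, $\ell(\upsilon\langle\cdots\rangle)=\tau$, $\mathrm{key}(\theta)=k$. Forward CCSK$^{\mathrm P}$ transitions: least relation closed under (act) $\alpha.X\xrightarrow{\alpha[k]}\alpha[k].X$ if $\mathrm{keys}(X)=\emptyset$; (pre) $X\xrightarrow\theta X',\mathrm{key}(\theta)\ne k\Rightarrow\alpha[k].X\xrightarrow\theta\alpha[k].X'$; (res) $X\xrightarrow\theta X',\ell(\theta)\notin\{\lambda,\overline\lambda\}\Rightarrow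 X\backslash\lambda\xrightarrow\theta X'\backslash\lambda$; (par) $X\xrightarrow\theta X',\mathrm{key}(\theta)\notin\mathrm{keys}(Y)\Rightarrow X|Y\xrightarrow{|_{\mathrm L}\theta}X'|Y$, $Y|X\xrightarrow{|_{\mathrm R}\theta}Y|X'$; (syn) $X\xrightarrow{\upsilon_1\lambda[k]}X',Y\xrightarrow{\upsilon_2\overline\lambda[k]}Y'\Rightarrow X|Y\xrightarrow{\langle\upsilon_1\lambda[k],\upsilon_2\overline\lambda[k]\rangle}X'|Y'$; (sum) $X\xrightarrow\theta X',\mathrm{keys}(Y)=\emptyset\Rightarrow X+Y\xrightarrow{+_{\mathrm L}\theta}X'+Y$, $Y+X\xrightarrow{+_{\mathrm R}\theta}Y+X'$. Backward transitions are converses; $\bar t$ is the inverse of $t$. A path is a sequence of composable transitions; it is rooted if its source cannot perform a backward transition. $X$ is reachable if there is a path from a standard process to $X$. Transitions are connected if there is a path from the source of one to the target of the other. Independence $\iota$ on proof labels: least relation closed under (C1) $+_D\theta\mathrel\iota+_D\theta'$ if $\theta\mathrel\iota\theta'$; (P1) $|_D\theta\mathrel\iota|_D\theta'$ if $\theta\mathrel\iota\theta'$; (P2$_k$) $|_D\theta\mathrel\iota|_{\bar D}\theta'$ if keys differ; (S1) $|_D\theta\mathrel\iota\langle\theta_{\mathrm L},\theta_{\mathrm R}\rangle$ if $\theta\mathrel\iota\theta_D$; (S2) $\langle\theta_{\mathrm L},\theta_{\mathrm R}\rangle\mathrel\iota|_D\theta$ if $\theta_D\mathrel\iota\theta$;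 (S3) $\langle\theta_1,\theta_2\rangle\mathrel\iota\langle\theta_1',\theta_2'\rangle$ if $\theta_1\mathrel\iota\theta_1'$, $\theta_2\mathrel\iota\theta_2'$. On CCSK$^{\mathrm P}$ transitions $t\mathrel\iota u$ iff connected and labels $\iota$. Events: $\sim$ is the smallest equivalence on CCSK$^{\mathrm P}$ transitions with $t\sim t'$ whenever $t:P\to Q$, $u:P\to R$, $u':Q\to S$, $t':R\to S$ ($u'$ with label and direction of $u$, $t'$ of $t$) and $t\mathrel\iota u$; events are classes $[t]$, forward events are classes of forward transitions, $\bar e=[\bar t]$; all transitions of an event have the same key, denoted $\mathrm{key}(e)$. $\sharp(\varepsilon,e)=0$, $\sharp(tr,e)=\sharp(r,e)+1$ if $t\in e$, $\sharp(r,e)-1$ if $t\in\bar e$, else $\sharp(r,e)$. For forward events, $e\le e'$ iff every rooted path $r$ with $\sharp(r,e')>0$ has $\sharp(r,e)>0$. $\mathrm{ev}(X)$ is the set of forward events $e$ such that some rooted path $r$ with target $X$ has $\sharp(r,e)>0$. The partial order $\le_X$ on $\mathrm{keys}(X)$ is the reflexive transitive closure of $\mathrm{ord}(X)$, where $\mathrm{ord}(\mathbf 0)=\emptyset$, $\mathrm{ord}(\alpha.X)=\mathrm{ord}(X\backslash\lambda)=\mathrm{ord}(X)$, $\mathrm{ord}(X+Y)=\mathrm{ord}(X|Y)=\mathrm{ord}(X)\cup\mathrm{ord}(Y)$, and $\mathrm{ord}(\alpha[n].X)=\mathrm{ord}(X)\cup\{(n,k)\mid k\in\mathrm{keys}(X)\}$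 (pairs $(n,k)$ meaning $n<k$). *)

(* Defs.v *)
From Stdlib Require Import List ZArith Relations.
Import ListNotations.
Set Implicit Arguments.

Inductive vis : Type := Nm (a : nat) | Co (a : nat).
Definition vbar (l : vis) : vis := match l with Nm a => Co a | Co a => Nm a end.

Inductive label : Type := Vis (l : vis) | Tau.

Definition key := nat.

Inductive proc : Type :=
| Nil : proc
| Pre : label -> proc -> proc
| Res : proc -> vis -> proc
| Sum : proc -> proc -> proc
| Par : proc -> proc -> proc
| Keyed : label -> key -> proc -> proc.

Fixpoint keys (X : proc) : list key :=
  match X with
  | Nil => []
  | Pre _ X => keys X
  | Res X _ => keys X
  | Sum X Y => keys X ++ keys Y
  | Par X Y => keys X ++ keys Y
  | Keyed _ k X => k :: keys X
  end.

Definition standard (X : proc) : Prop := keys X = [].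

Inductive dir : Type := DL | DR.
Definition dbar (D : dir) : dir := match D with DL => DR | DR => DL end.

(** Proof keyed labels.  [PPar D θ] is |_D θ, [PSum D θ] is +_D θ,
    [PAct α k] is α[k] (with empty prefix), [PSyn θ1 θ2] is ⟨θ1,θ2⟩. *)
Inductive plabel : Type :=
| PAct : label -> key -> plabel
| PPar : dir -> plabel -> plabel
| PSum : dir -> plabel -> plabel
| PSyn : plabel -> plabel -> plabel.

Fixpoint lab (t : plabel) : label :=
  match t with
  | PAct a _ => a
  | PPar _ t => lab t
  | PSum _ t => lab t
  | PSyn _ _ => Tau
  end.

Fixpoint pkey (t : plabel) : key :=
  match t with
  | PAct _ k => k
  | PPar _ t => pkey t
  | PSum _ t => pkey t
  | PSyn t _ => pkey t
  end.

Inductive step : proc -> plabel -> proc -> Prop :=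
| s_act : forall a k X, keys X = [] -> step (Pre a X) (PAct a k) (Keyed a k X)
| s_pre : forall a k X th X', step X th X' -> pkey th <> k ->
    step (Keyed a k X) th (Keyed a k X')
| s_res : forall l X th X', step X th X' ->
    lab th <> Vis l -> lab th <> Vis (vbar l) ->
    step (Res X l) th (Res X' l)
| s_parL : forall X Y th X', step X th X' -> ~ In (pkey th) (keys Y) ->
    step (Par X Y) (PPar DL th) (Par X' Y)
| s_parR : forall X Y th X', step X th X' -> ~ In (pkey th) (keys Y) ->
    step (Par Y X) (PPar DR th) (Par Y X')
| s_syn : forall l X Y th1 th2 X' Y', step X th1 X' -> step Y th2 Y' ->
    lab th1 = Vis l -> lab th2 = Vis (vbar l) -> pkey th1 = pkey th2 ->
    step (Par X Y) (PSyn th1 th2) (Par X' Y')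
| s_sumL : forall X Y th X', step X th X' -> keys Y = [] ->
    step (Sum X Y) (PSum DL th) (Sum X' Y)
| s_sumR : forall X Y th X', step X th X' -> keys Y = [] ->
    step (Sum Y X) (PSum DR th) (Sum Y X').

Record trans : Type := Tr { tsrc : proc; tlab : plabel; tfwd : bool; ttgt : proc }.

Definition is_trans (t : trans) : Prop :=
  if tfwd t then step (tsrc t) (tlab t) (ttgt t) else step (ttgt t) (tlab t) (tsrc t).

Definition tinv (t : trans) : trans := Tr (ttgt t) (tlab t) (negb (tfwd t)) (tsrc t).

Inductive path : proc -> list trans -> proc -> Prop :=
| path_nil : forall P, path P [] P
| path_cons : forall t r Q, is_trans t -> path (ttgt t) r Q -> path (tsrc t) (t :: r) Q.

Definition rooted_proc (P : proc) : Prop := ~ exists th P', step P' th P.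

Definition rooted_path (r : list trans) : Prop :=
  exists P Q, path P r Q /\ rooted_proc P.

Definition reachable (X : proc) : Prop :=
  exists P r, standard P /\ path P r X.

Definition connected (t u : trans) : Prop :=
  (exists r, path (tsrc t) r (ttgt u)) \/ (exists r, path (tsrc u) r (ttgt t)).

Definition pick (D : dir) (a b : plabel) : plabel := match D with DL => a | DR => b end.

Inductive indep : plabel -> plabel -> Prop :=
| iC1 : forall D t t', indep t t' -> indep (PSum D t) (PSum D t')
| iP1 : forall D t t', indep t t' -> indep (PPar D t) (PPar D t')
| iP2 : forall D t t', pkey t <> pkey t' -> indep (PPar D t) (PPar (dbar D) t')
| iS1 : forall D t tL tR, indep t (pick D tL tR) -> indep (PPar D t) (PSyn tL tR)
| iS2 : forall D t tL tR, indep (pick D tL tR) t -> indep (PSyn tL tR) (PPar D t)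
| iS3 : forall t1 t2 t1' t2', indep t1 t1' -> indep t2 t2' ->
    indep (PSyn t1 t2) (PSyn t1' t2').

Definition tindep (t u : trans) : Prop := connected t u /\ indep (tlab t) (tlab u).

Definition square (t t' : trans) : Prop :=
  exists u u', is_trans t /\ is_trans u /\ is_trans u' /\ is_trans t' /\
    tsrc u = tsrc t /\ tsrc u' = ttgt t /\ tsrc t' = ttgt u /\ ttgt t' = ttgt u' /\
    tlab u' = tlab u /\ tfwd u' = tfwd u /\ tlab t' = tlab t /\ tfwd t' = tfwd t /\
    tindep t u.

Definition ev_eq : trans -> trans -> Prop := clos_refl_sym_trans trans square.

(** Events are represented by a representative transition [e]: the event is [e],
    and its inverse event is [tinv e].  [in_ev s e] means s ∈ [e]. *)
Definition in_ev (s e : trans) : Prop := ev_eq s e.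

Definition ev_key (e : trans) : key := pkey (tlab e).

Inductive sharp : list trans -> trans -> Z -> Prop :=
| sh_nil : forall e, sharp [] e 0
| sh_in : forall s r e z, in_ev s e -> sharp r e z -> sharp (s :: r) e (z + 1)
| sh_inbar : forall s r e z, ~ in_ev s e -> in_ev s (tinv e) -> sharp r e z ->
    sharp (s :: r) e (z - 1)
| sh_out : forall s r e z, ~ in_ev s e -> ~ in_ev s (tinv e) -> sharp r e z ->
    sharp (s :: r) e z.

Definition sharp_pos (r : list trans) (e : trans) : Prop :=
  exists z, sharp r e z /\ (0 < z)%Z.

Definition fwd_event_rep (e : trans) : Prop := is_trans e /\ tfwd e = true.

Definition ev_le (e e' : trans) : Prop :=
  forall r, rooted_path r -> sharp_pos r e' -> sharp_pos r e.

Definition in_evX (X : proc) (e : trans) : Prop :=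
  exists P r, rooted_proc P /\ path P r X /\ sharp_pos r e.

Fixpoint ord (X : proc) (n k : key) : Prop :=
  match X with
  | Nil => False
  | Pre _ X => ord X n k
  | Res X _ => ord X n k
  | Sum X Y => ord X n k \/ ord Y n k
  | Par X Y => ord X n k \/ ord Y n k
  | Keyed _ m X => ord X n k \/ (n = m /\ In k (keys X))
  end.

Definition le_X (X : proc) (n k : key) : Prop :=
  In n (keys X) /\ In k (keys X) /\ clos_refl_trans key (ord X) n k.

(* Main.v *)
Require Import Defs.
From Stdlib Require Import List ZArith Relations Lia Classical ClassicalEpsilon.
Import ListNotations.
Set Implicit Arguments.

Definition dec (P : Prop) : {P} + {~P} := excluded_middle_informative P.

Fixpoint restrict (D : key -> Prop) (X : proc) : proc :=
  match X with
  | Nil => Nil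
  | Pre a Y => Pre a (restrict D Y)
  | Res Y l => Res (restrict D Y) l
  | Sum Y Z => Sum (restrict D Y) (restrict D Z)
  | Par Y Z => Par (restrict D Y) (restrict D Z)
  | Keyed a k Y => if dec (D k) then Keyed a k (restrict D Y) else Pre a (restrict D Y)
  end.

Definition undo (X : proc) (j : key) := restrict (fun x => x <> j) X.

Fixpoint good (X : proc) : Prop :=
  match X with
  | Nil => True
  | Pre _ Y => keys Y = []
  | Res Y _ => good Y
  | Sum Y Z => good Y /\ good Z
  | Par Y Z => good Y /\ good Z
  | Keyed _ _ Y => good Y
  end.

Lemma keys_restrict D X x : In x (keys (restrict D X)) <-> In x (keys X) /\ D x.
Proof.
  induction X; simpl; rewrite ?in_app_iff; try tauto.
  destruct (dec (D k)); simpl; rewrite ?IHX; firstorder congruence.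
Qed.

Lemma ord_keys X x y : ord X x y -> In x (keys X) /\ In y (keys X).
Proof.
  induction X; simpl; rewrite ?in_app_iff; firstorder (subst; auto).
Qed.

Lemma ord_restrict D X x y : ord (restrict D X) x y <-> ord X x y /\ D x /\ D y.
Proof.
  induction X; simpl; try tauto.
  destruct (dec (D k)); simpl; rewrite ?IHX, ?keys_restrict.
  - split; [intros [H|[-> H]]|intros [[H|[-> H]] HD]]; subst; tauto.
  - split; [tauto|]. intros [[H|[-> H]] HD]; tauto.
Qed.

Lemma restrict_id D X : (forall x, In x (keys X) -> D x) -> restrict D X = X.
Proof.
  induction X; simpl; intros H; f_equal;
    try (apply IHX || apply IHX1 || apply IHX2); intros; try (apply H; rewrite ?in_app_iff; tauto); auto.
  destruct (dec (D k)); [f_equal; apply IHX; auto | exfalso; auto].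
Qed.
Lemma restrict_ext D D' X : (forall x, D x <-> D' x) -> restrict D X = restrict D' X.
Proof.
  intros H; induction X; simpl; f_equal; auto.
  destruct (dec (D k)), (dec (D' k)); try f_equal; auto; exfalso; firstorder.
Qed.

Lemma restrict_restrict D D' X :
  restrict D (restrict D' X) = restrict (fun x => D x /\ D' x) X.
Proof.
  induction X; simpl; f_equal; auto.
  destruct (dec (D' k)), (dec (D k /\ D' k)); simpl; try destruct (dec (D k)); try f_equal; auto;
   exfalso; tauto.
Qed.

Lemma restrict_undo D X j : ~ D j -> restrict D (undo X j) = restrict D X.
Proof.
  intros H. unfold undo. rewrite restrict_restrict. apply restrict_ext.
  intros x; split; [tauto|]. intros Hx; split; auto. intros ->; auto.
Qed.

Lemma undo_notin X j : ~ In j (keys X) -> undo X j = X.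
Proof. intros H; apply restrict_id. intros x Hx ->; auto. Qed.

Lemma len_restrict_le D X : length (keys (restrict D X)) <= length (keys X).
Proof.
  induction X; simpl; rewrite ?length_app; try lia.
  destruct (dec (D k)); simpl; lia.
Qed.

Lemma len_restrict_lt D X j : In j (keys X) -> ~ D j ->
  length (keys (restrict D X)) < length (keys X).
Proof.
  induction X; simpl; rewrite ?length_app, ?in_app_iff; try tauto.
  - intros [H|H] Hj; [specialize (IHX1 H Hj); pose proof (len_restrict_le D X2)
                     |specialize (IHX2 H Hj); pose proof (len_restrict_le D X1)]; lia.
  - intros [H|H] Hj; [specialize (IHX1 H Hj); pose proof (len_restrict_le D X2)
                     |specialize (IHX2 H Hj); pose proof (len_restrict_le D X1)]; lia.
  - intros [E|H] Hj; pose proof (len_restrict_le D X).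
    + subst. destruct (dec (D j)); try tauto; simpl; lia.
    + destruct (dec (D k)); simpl; specialize (IHX H Hj); lia.
Qed.

Lemma keys_nil_good X : keys X = [] -> good X.
Proof.
  induction X; simpl; auto; try (intros H; apply app_eq_nil in H; tauto); discriminate.
Qed.

Lemma good_restrict D X : good X -> (forall x y, ord X x y -> D y -> D x) -> good (restrict D X).
Proof.
  induction X; simpl; intros G H; auto.
  - destruct (keys (restrict D X)) eqn:E; auto.
    exfalso. assert (In k (keys (restrict D X))) by (rewrite E; simpl; auto).
    apply keys_restrict in H0. rewrite G in H0. simpl in H0; tauto.
  - split; [apply IHX1|apply IHX2]; try tauto; intros x y Ho; apply H; simpl; auto.
  - split; [apply IHX1|apply IHX2]; try tauto; intros x y Ho; apply H; simpl; auto.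
  - destruct (dec (D k)); simpl.
    + apply IHX; auto; intros x y Ho; apply H; simpl; auto.
    + destruct (keys (restrict D X)) eqn:E; auto.
      exfalso. assert (In k0 (keys (restrict D X))) by (rewrite E; simpl; auto).
      apply keys_restrict in H0. destruct H0. apply n. eapply H; eauto.
Qed.

Lemma good_restrict_ord D X x y : good (restrict D X) -> ord X x y -> D y -> D x.
Proof.
  induction X; simpl; try tauto.
  - intros G H; apply keys_nil_good in G; eauto.
  - destruct (dec (D k)); simpl.
    + intros G [H|[-> H]]; eauto.
    + intros G [H|[-> H]] Hy.
      * apply keys_nil_good in G. eauto.
      * exfalso. assert (In y (keys (restrict D X))) by (apply keys_restrict; auto).
        rewrite G in H0; auto.
Qed.

Lemma step_fresh A th B : step A th B -> ~ In (pkey th) (keys A).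
Proof.
  induction 1; simpl; rewrite ?in_app_iff; try tauto.
  - rewrite H; simpl; auto.
  - intros [E|E]; auto.
  - intros [E|E]; [apply IHstep1; auto|apply IHstep2; congruence].
  - rewrite H0; simpl; tauto.
  - rewrite H0; simpl; tauto.
Qed.

Lemma step_new A th B : step A th B -> In (pkey th) (keys B).
Proof. induction 1; simpl; rewrite ?in_app_iff; auto. Qed.

Lemma step_keys_sub A th B : step A th B -> forall x, In x (keys A) -> In x (keys B).
Proof. induction 1; simpl; intros x; rewrite ?in_app_iff; try rewrite H; simpl; firstorder. Qed.

Lemma step_keys_inv A th B : step A th B -> forall x, In x (keys B) -> x = pkey th \/ In x (keys A).
Proof.
  induction 1; simpl; intros x; rewrite ?in_app_iff; try rewrite H; simpl; try firstorder.
  destruct (IHstep2 x H4); auto; left; congruence.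
Qed.

Lemma step_len A th B : step A th B -> length (keys A) < length (keys B).
Proof.
  induction 1; simpl; rewrite ?length_app; try rewrite H; simpl; try lia.
Qed.

Lemma step_ord_mono A th B : step A th B -> forall x y, ord A x y -> ord B x y.
Proof.
  induction 1; simpl; intros x y; try rewrite H; simpl; try firstorder.
  right; split; auto. eapply step_keys_sub; eauto.
Qed.

Lemma step_ord_inv A th B : step A th B -> forall x y, ord B x y ->
  ord A x y \/ (y = pkey th /\ In x (keys A)).
Proof.
  induction 1; simpl; intros x y; rewrite ?in_app_iff.
  - rewrite H; simpl; tauto.
  - intros [Ho|[-> Hy]].
    + destruct (IHstep _ _ Ho); tauto.
    + destruct (step_keys_inv H _ Hy); auto.
  - auto.
  - intros [Ho|Ho]; [destruct (IHstep _ _ Ho)|]; tauto.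
  - intros [Ho|Ho]; [|destruct (IHstep _ _ Ho)]; tauto.
  - intros [Ho|Ho]; [destruct (IHstep1 _ _ Ho)|destruct (IHstep2 _ _ Ho)]; try tauto.
    match goal with H: _ /\ _ |- _ => destruct H end. right; split; [congruence|tauto].
  - intros [Ho|Ho]; [destruct (IHstep _ _ Ho)|]; tauto.
  - intros [Ho|Ho]; [|destruct (IHstep _ _ Ho)]; tauto.
Qed.

Lemma step_undo A th B : step A th B -> undo B (pkey th) = A.
Proof.
  unfold undo; induction 1; simpl.
  - destruct (dec (k <> k)) as [n|n]; [now exfalso|]. f_equal. apply restrict_id. rewrite H; simpl; tauto.
  - destruct (dec (k <> pkey th)) as [n|n]; [|exfalso; apply n; auto]. f_equal; auto.
  - f_equal; auto.
  - f_equal; auto. apply restrict_id. intros x Hx ->; auto.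
  - f_equal; auto. apply restrict_id. intros x Hx ->; auto.
  - f_equal; auto. rewrite H3; auto.
  - f_equal; auto. apply restrict_id. rewrite H0; simpl; tauto.
  - f_equal; auto. apply restrict_id. rewrite H0; simpl; tauto.
Qed.

Lemma step_good A th B : step A th B -> good A -> good B.
Proof.
  induction 1; simpl; try tauto.
  intros G. now apply keys_nil_good.
Qed.

Lemma step_neq A th B : step A th B -> A <> B.
Proof. intros H E; apply step_len in H; subst; lia. Qed.

Lemma step_det A th B : step A th B -> forall th', step A th' B -> th = th'.
Proof.
  induction 1; intros th' H'; inversion H'; subst; auto; try f_equal; auto;
  try (exfalso; eapply step_neq; eauto; fail);
  match goal with H: step ?A _ ?A |- _ => destruct (step_neq H eq_refl) end.
Qed.

Lemma undo_keyed_neq a m W j : m <> j -> undo (Keyed a m W) j = Keyed a m (undo W j).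
Proof. intros H; unfold undo; simpl; destruct (dec (m <> j)); tauto. Qed.
Lemma undo_par X Y j : undo (Par X Y) j = Par (undo X j) (undo Y j).
Proof. reflexivity. Qed.
Lemma undo_sum X Y j : undo (Sum X Y) j = Sum (undo X j) (undo Y j).
Proof. reflexivity. Qed.
Lemma undo_res X l j : undo (Res X l) j = Res (undo X j) l.
Proof. reflexivity. Qed.

Lemma keys_undo X j x : In x (keys (undo X j)) <-> In x (keys X) /\ x <> j.
Proof. apply keys_restrict. Qed.

Lemma undo_step_notin A th B j : step A th B -> ~ In j (keys A) -> j <> pkey th -> undo B j = B.
Proof.
  intros H Hj Hk. apply undo_notin. intros Hi. destruct (step_keys_inv H _ Hi); auto.
Qed.

Lemma diamond : forall Y th Z, step Y th Z -> forall X thj, step X thj Y ->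
  ~ ord Z (pkey thj) (pkey th) ->
  step (undo Z (pkey thj)) thj Z /\ step X th (undo Z (pkey thj)) /\ indep th thj.
Proof.
  induction 1; intros X0 thj HX Hord; inversion HX; subst; simpl in *.
  -
    exfalso. apply Hord. right. split; auto. eapply step_new; eauto.
  -
    destruct (IHstep _ _ H5) as (A1 & A2 & A3); [tauto|].
    rewrite undo_keyed_neq by auto. split; [|split]; auto; constructor; auto.
  -
    destruct (IHstep _ _ H4) as (A1 & A2 & A3); [tauto|].
    rewrite undo_res. split; [|split]; auto; constructor; auto.
  -
    rewrite undo_par. destruct (IHstep _ _ H5) as (A1 & A2 & A3); [tauto|].
    rewrite (undo_notin Y) by auto.
    split; [|split]; constructor; auto.
  -
    rewrite undo_par.
    assert (Hjk : pkey th0 <> pkey th).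
    { intros E. apply H0. rewrite <- E. eapply step_new; eauto. }
    rewrite (step_undo H5). rewrite (undo_step_notin H H6 Hjk).
    split; [|split].
    + constructor; auto. intros Hi. destruct (step_keys_inv H _ Hi); auto.
    + constructor; auto. intros Hi; apply H0. eapply step_keys_sub; eauto.
    + apply (iP2 DL). auto.
  -
    rewrite undo_par. destruct (IHstep _ _ H3) as (A1 & A2 & A3); [tauto|].
    assert (E : undo Y (pkey th1) = Y0) by (rewrite H9; apply (step_undo H4)). rewrite E.
    split; [|split].
    + econstructor; eauto.
    + constructor; auto. intros Hi; apply H0. eapply step_keys_sub; eauto.
    + apply (iS1 DL). auto.
  -
    rewrite undo_par.
    assert (Hjk : pkey th0 <> pkey th).
    { intros E. apply H0. rewrite <- E. eapply step_new; eauto. }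
    rewrite (step_undo H5). rewrite (undo_step_notin H H6 Hjk).
    split; [|split].
    + constructor; auto. intros Hi. destruct (step_keys_inv H _ Hi); auto.
    + constructor; auto. intros Hi; apply H0. eapply step_keys_sub; eauto.
    + apply (iP2 DR). auto.
  -
    rewrite undo_par. destruct (IHstep _ _ H5) as (A1 & A2 & A3); [tauto|].
    rewrite (undo_notin Y) by auto.
    split; [|split]; constructor; auto.
  -
    rewrite undo_par. destruct (IHstep _ _ H4) as (A1 & A2 & A3); [rewrite <- H9; tauto|].
    rewrite <- H9 in *. rewrite (step_undo H3).
    split; [|split].
    + econstructor; eauto.
    + constructor; auto. intros Hi; apply H0. eapply step_keys_sub; eauto.
    + apply (iS1 DR). auto.
  -
    rewrite undo_par. destruct (IHstep1 _ _ H8) as (A1 & A2 & A3); [tauto|].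
    assert (Hjk : pkey th <> pkey th2).
    { intros E. apply (step_fresh H). rewrite H3, <- E. eapply step_new; eauto. }
    rewrite (undo_step_notin H0 H9 Hjk).
    split; [|split].
    + constructor; auto. intros Hi. destruct (step_keys_inv H0 _ Hi); auto.
    + econstructor; eauto.
    + apply (iS2 DL). auto.
  -
    rewrite undo_par. destruct (IHstep2 _ _ H8) as (A1 & A2 & A3); [rewrite <- H3; tauto|].
    assert (Hjk : pkey th <> pkey th1).
    { intros E. apply (step_fresh H0). rewrite <- H3, <- E. eapply step_new; eauto. }
    rewrite (undo_step_notin H H9 Hjk).
    split; [|split].
    + constructor; auto. intros Hi. destruct (step_keys_inv H _ Hi); auto.
    + econstructor; eauto.
    + apply (iS2 DR). auto.
  -
    rewrite undo_par. destruct (IHstep1 _ _ H6) as (A1 & A2 & A3); [tauto|].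
    destruct (IHstep2 _ _ H7) as (B1 & B2 & B3); [rewrite <- H3, <- H12; tauto|].
    rewrite <- H12 in B1, B2.
    split; [|split].
    + econstructor; eauto.
    + econstructor; eauto.
    + constructor; auto.
  -
    rewrite undo_sum. destruct (IHstep _ _ H5) as (A1 & A2 & A3); [tauto|].
    rewrite (undo_notin Y) by (rewrite H0; simpl; auto).
    split; [|split]; constructor; auto.
  - exfalso. pose proof (step_new H5). rewrite H0 in H1. auto.
  - exfalso. pose proof (step_new H5). rewrite H0 in H1. auto.
  - rewrite undo_sum. destruct (IHstep _ _ H5) as (A1 & A2 & A3); [tauto|].
    rewrite (undo_notin Y) by (rewrite H0; simpl; auto).
    split; [|split]; constructor; auto.
Qed.

Inductive FR : proc -> Prop :=
| FR_std : forall P, keys P = [] -> FR P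
| FR_step : forall A th B, FR A -> step A th B -> FR B.

Lemma FR_good X : FR X -> good X.
Proof. induction 1. now apply keys_nil_good. eapply step_good; eauto. Qed.

Lemma step_max A th B : step A th B -> forall y, ~ ord B (pkey th) y.
Proof.
  intros H y Ho. destruct (step_ord_inv H _ _ Ho) as [Ho'|[_ Hi]].
  - apply (step_fresh H). apply (ord_keys _ _ _ Ho').
  - apply (step_fresh H Hi).
Qed.

Lemma undo_lemma : forall B, FR B -> forall j, In j (keys B) -> (forall y, ~ ord B j y) ->
  exists thj, pkey thj = j /\ step (undo B j) thj B /\ FR (undo B j).
Proof.
  induction 1; intros j Hj Hm.
  - rewrite H in Hj; destruct Hj.
  - destruct (PeanoNat.Nat.eq_dec j (pkey th)) as [->|Hne].
    + exists th. rewrite (step_undo H0). auto.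
    + destruct (step_keys_inv H0 _ Hj) as [E|Hj']; [congruence|].
      destruct (IHFR j Hj') as (thj & <- & S1 & F1).
      { intros y Hy. apply (Hm y). eapply step_ord_mono; eauto. }
      destruct (diamond H0 S1 (Hm _)) as (T1 & T2 & _).
      exists thj. split; auto. split; auto. eapply FR_step; eauto.
Qed.

Lemma FR_back A th B : step A th B -> FR B -> FR A.
Proof.
  intros H F. destruct (undo_lemma F _ (step_new H) (step_max H)) as (thj & _ & _ & F').
  rewrite (step_undo H) in F'. auto.
Qed.

Lemma max_lemma (D : key -> Prop) : forall B, FR B -> (forall x y, ord B x y -> D y -> D x) ->
  forall j0, In j0 (keys B) -> ~ D j0 ->
  exists j, In j (keys B) /\ ~ D j /\ forall y, ~ ord B j y.
Proof.
  induction 1; intros Hd j0 Hj0 HD.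
  - rewrite H in Hj0; destruct Hj0.
  - destruct (dec (D (pkey th))) as [Dk|nDk].
    + destruct (step_keys_inv H0 _ Hj0) as [E|Hj0']; [subst; tauto|].
      destruct (IHFR (fun x y Ho => Hd x y (step_ord_mono H0 _ _ Ho)) j0 Hj0' HD)
        as (j & Hj & nD & Hm).
      exists j. split; [eapply step_keys_sub; eauto|]. split; auto.
      intros y Ho. destruct (step_ord_inv H0 _ _ Ho) as [Ho'|[-> _]].
      * eapply Hm; eauto.
      * apply nD. eapply Hd; eauto.
    + exists (pkey th). split; [eapply step_new; eauto|]. split; auto. apply (step_max H0).
Qed.

Lemma is_trans_FR t : is_trans t -> (FR (tsrc t) <-> FR (ttgt t)).
Proof.
  unfold is_trans. destruct (tfwd t); intros H; split; intros F.
  - eapply FR_step; eauto.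
  - eapply FR_back; eauto.
  - eapply FR_back; eauto.
  - eapply FR_step; eauto.
Qed.

Lemma path_FR A r B : path A r B -> (FR A <-> FR B) /\ (forall s, In s r -> (FR A <-> FR (tsrc s))).
Proof.
  induction 1.
  - split; [tauto|]. intros s [].
  - destruct IHpath as [I1 I2]. pose proof (is_trans_FR _ H) as I0.
    split; [tauto|]. intros s [<-|Hs]; [tauto|]. specialize (I2 s Hs). tauto.
Qed.

Lemma FR_rooted P : FR P -> rooted_proc P -> keys P = [].
Proof.
  intros F R. destruct F; auto. exfalso. apply R. eauto.
Qed.

Lemma std_rooted P : keys P = [] -> rooted_proc P.
Proof. intros H [th [P' S]]. pose proof (step_new S). rewrite H in H0; auto. Qed.

Lemma path_app A r B r' C : path A r B -> path B r' C -> path A (r ++ r') C.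
Proof. induction 1; simpl; auto. intros; constructor; auto. Qed.

Lemma FR_path B : FR B -> exists P r, keys P = [] /\ path P r B.
Proof.
  induction 1.
  - exists P, []. split; auto. constructor.
  - destruct IHFR as (P & r & HP & Hr). exists P, (r ++ [Tr A th true B]). split; auto.
    eapply path_app; eauto. apply (@path_cons (Tr A th true B) [] B); simpl; auto. constructor.
Qed.

Lemma reach_FR X : reachable X -> FR X.
Proof.
  intros (P & r & HP & Hr). apply (proj1 (path_FR Hr)). now constructor.
Qed.

Lemma tinv_tinv t : tinv (tinv t) = t.
Proof. destruct t as [a b c d]; unfold tinv; simpl; rewrite Bool.negb_involutive; auto. Qed.

Lemma is_trans_tinv t : is_trans t -> is_trans (tinv t).
Proof. destruct t as [a b [|] d]; unfold is_trans, tinv; simpl; auto. Qed.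

Lemma square_tinv t t' : square t t' -> square (tinv t) (tinv t').
Proof.
  intros (u & u' & I1 & I2 & I3 & I4 & E1 & E2 & E3 & E4 & E5 & E6 & E7 & E8 & [C Hi]).
  exists u', u. destruct t as [P th f Q], t' as [R th' f' S], u as [P1 thu g R1], u' as [Q1 thu' g' S1].
  unfold tinv in *; simpl in *; subst.
  repeat split; auto.
  - exact (is_trans_tinv _ I1).
  - exact (is_trans_tinv _ I4).
  - left. exists [Tr Q thu g S1]. apply (@path_cons (Tr Q thu g S1) [] S1); simpl; auto. constructor.
Qed.

Lemma ev_eq_tinv t t' : ev_eq t t' -> ev_eq (tinv t) (tinv t').
Proof.
  induction 1.
  - apply rst_step. now apply square_tinv.
  - apply rst_refl.
  - now apply rst_sym.
  - eapply rst_trans; eauto.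
Qed.

Lemma square_FR t t' : square t t' -> (FR (tsrc t) <-> FR (tsrc t')).
Proof.
  intros (u & u' & I1 & I2 & I3 & I4 & E1 & E2 & E3 & E4 & _).
  rewrite <- E1, E3. apply is_trans_FR; auto.
Qed.

Lemma ev_eq_FR t t' : ev_eq t t' -> (FR (tsrc t) <-> FR (tsrc t')).
Proof.
  induction 1; try tauto. now apply square_FR.
Qed.

Definition down (X : proc) (k : key) : key -> Prop :=
  fun x => clos_refl_trans key (ord X) x k.

Definition kend t := if tfwd t then ttgt t else tsrc t.
Definition Dt t := down (kend t) (pkey (tlab t)).
Definition cfgt t := restrict (Dt t) (kend t).
Definition Inv t t' := tlab t = tlab t' /\ tfwd t = tfwd t' /\
  (forall x, Dt t x <-> Dt t' x) /\ cfgt t = cfgt t'.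

Lemma down_mono X Y k : (forall x y, ord X x y -> ord Y x y) -> forall x, down X k x -> down Y k x.
Proof.
  intros H x Hx. unfold down in *. induction Hx.
  - apply rt_step; auto.
  - apply rt_refl.
  - eapply rt_trans; eauto.
Qed.

Lemma step_not_down A th B k : step A th B -> pkey th <> k -> ~ down B k (pkey th).
Proof.
  intros H Hk Hd. unfold down in Hd. apply clos_rt_rt1n in Hd. inversion Hd; subst.
  - auto.
  - eapply step_max; eauto.
Qed.

Lemma Lcmp A th B k : step A th B -> pkey th <> k ->
  (forall x, down A k x <-> down B k x) /\ restrict (down A k) A = restrict (down B k) B.
Proof.
  intros H Hk. pose proof (step_not_down H Hk) as Hn.
  assert (Hiff : forall x, down A k x <-> down B k x).
  { intros x; split.
    - apply down_mono. apply (step_ord_mono H).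
    - unfold down. intros Hx. apply clos_rt_rt1n in Hx. induction Hx.
      + apply rt_refl.
      + destruct (step_ord_inv H _ _ H0) as [Ho|[-> _]].
        * eapply rt_trans; [apply rt_step; eauto|]. apply IHHx; auto.
        * exfalso. apply Hn. unfold down. apply clos_rt1n_rt. auto. }
  split; auto.
  rewrite (restrict_ext _ _ A Hiff). rewrite <- (step_undo H).
  rewrite restrict_undo; auto.
Qed.

Lemma square_Inv t t' : square t t' -> Inv t t'.
Proof.
  intros (u & u' & I1 & I2 & I3 & I4 & E1 & E2 & E3 & E4 & E5 & E6 & E7 & E8 & _).
  destruct t as [P th f Q], t' as [R th' f' S], u as [P1 thu g R1], u' as [Q1 thu' g' S1].
  simpl in *; subst. unfold is_trans in *; simpl in *.
  unfold Inv, cfgt, Dt, kend; simpl. split; auto. split; auto.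
  destruct f, g.
  - destruct (Lcmp (k := pkey th) I3) as [H1 H2].
    { intros E. apply (step_fresh I3). rewrite E. eapply step_new; eauto. }
    auto.
  - destruct (Lcmp (k := pkey th) I3) as [H1 H2].
    { intros E. apply (step_fresh I1). rewrite <- E. eapply step_new; eauto. }
    split; [intros x; rewrite H1; tauto|auto].
  - destruct (Lcmp (k := pkey th) I2) as [H1 H2].
    { intros E. apply (step_fresh I2). rewrite E. eapply step_new; eauto. }
    auto.
  - destruct (Lcmp (k := pkey th) I2) as [H1 H2].
    { intros E. apply (step_fresh I1). rewrite <- E. eapply step_new; eauto. }
    split; [intros x; rewrite H1; tauto|auto].
Qed.

Lemma ev_eq_Inv t t' : ev_eq t t' -> Inv t t'.
Proof.
  induction 1.
  - now apply square_Inv.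
  - unfold Inv; repeat split; auto.
  - destruct IHclos_refl_sym_trans as (A1 & A2 & A3 & A4). unfold Inv; repeat split; auto;
    apply A3; auto.
  - destruct IHclos_refl_sym_trans1 as (A1 & A2 & A3 & A4).
    destruct IHclos_refl_sym_trans2 as (B1 & B2 & B3 & B4).
    unfold Inv; repeat split; try congruence; intros; [apply B3, A3|apply A3, B3]; auto.
Qed.

Lemma canon : forall n A th B (D : key -> Prop), length (keys B) <= n -> FR A -> step A th B ->
  (forall x y, ord B x y -> D y -> D x) -> D (pkey th) ->
  step (restrict D A) th (restrict D B) /\
  ev_eq (Tr A th true B) (Tr (restrict D A) th true (restrict D B)).
Proof.
  induction n; intros A th B D Hl FA S Hd Dk;
  (destruct (classic (exists j, In j (keys B) /\ ~ D j)) as [(j0 & Hj0 & nD0)|Hno];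
   [|rewrite (restrict_id D B), (restrict_id D A);
      [split; [auto|apply rst_refl]
      | intros x Hx; apply NNPP; intros nD; apply Hno; exists x; split; auto;
        eapply step_keys_sub; eauto
      | intros x Hx; apply NNPP; intros nD; apply Hno; exists x; split; auto]]).
  - destruct (keys B); simpl in *; [destruct Hj0|lia].
  - assert (FB : FR B) by (eapply FR_step; eauto).
    destruct (max_lemma D FB Hd _ Hj0 nD0) as (j & Hj & nD & Hm).
    assert (Hjk : j <> pkey th) by (intros ->; auto).
    assert (HjA : In j (keys A)) by (destruct (step_keys_inv S _ Hj); auto; congruence).
    destruct (undo_lemma FA _ HjA (fun y Ho => Hm y (step_ord_mono S _ _ Ho)))
      as (thj & Ej & U1 & FU).
    subst j.
    destruct (diamond S U1 (Hm _)) as (T1 & T2 & Ind).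
    assert (Sq : square (Tr A th true B) (Tr (undo A (pkey thj)) th true (undo B (pkey thj)))).
    { exists (Tr A thj false (undo A (pkey thj))), (Tr B thj false (undo B (pkey thj))).
      unfold is_trans; simpl. repeat split; auto.
      left. exists [Tr A thj false (undo A (pkey thj))].
      apply (@path_cons (Tr A thj false (undo A (pkey thj))) [] _); simpl; auto. constructor. }
    destruct (IHn (undo A (pkey thj)) th (undo B (pkey thj)) D) as [R1 R2]; auto.
    + assert (NN : ~ (fun x => x <> pkey thj) (pkey thj)) by (simpl; tauto).
      pose proof (@len_restrict_lt (fun x => x <> pkey thj) B (pkey thj) Hj NN).
      unfold undo. lia.
    + intros x y Ho. apply Hd. unfold undo in Ho. apply ord_restrict in Ho. tauto.
    + rewrite !restrict_undo in R1, R2 by auto. split; auto.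
      eapply rst_trans; [apply rst_step; eauto|]. auto.
Qed.

Definition cE (e : trans) (Q : proc) : Prop := restrict (Dt e) Q = cfgt e.
Definition ind (P : Prop) : Z := if dec P then 1%Z else 0%Z.

Lemma Dt_keys e x : fwd_event_rep e -> Dt e x -> In x (keys (ttgt e)).
Proof.
  intros [He Hf]. unfold Dt, kend, down. rewrite Hf. intros Hx.
  apply clos_rt_rt1n in Hx. inversion Hx; subst.
  - unfold is_trans in He. rewrite Hf in He. eapply step_new; eauto.
  - exact (proj1 (ord_keys _ _ _ H)).
Qed.

Lemma cfg_has_k e : fwd_event_rep e -> In (pkey (tlab e)) (keys (cfgt e)).
Proof.
  intros F. unfold cfgt. apply keys_restrict. split.
  - pose proof (@Dt_keys e (pkey (tlab e)) F). destruct F as [_ Hf]. unfold kend; rewrite Hf.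
    apply H. apply rt_refl.
  - apply rt_refl.
Qed.

Lemma cE_keys e Q : fwd_event_rep e -> cE e Q -> In (pkey (tlab e)) (keys Q).
Proof.
  intros F H. pose proof (cfg_has_k F) as K. unfold cE in H. rewrite <- H in K.
  apply keys_restrict in K. tauto.
Qed.

Lemma restrict_and_comm D D' X : restrict (fun x => D x /\ D' x) X = restrict D' (restrict D X).
Proof. rewrite restrict_restrict. apply restrict_ext. tauto. Qed.

Lemma Lfwd e A th B : fwd_event_rep e -> FR A -> FR (tsrc e) -> step A th B ->
  (cE e A -> cE e B) /\ (cE e B -> ~ cE e A -> in_ev (Tr A th true B) e).
Proof.
  intros F FA Fe S.
  assert (Hno : ~ Dt e (pkey th) -> (cE e A <-> cE e B)).
  { intros nD. unfold cE. rewrite <- (step_undo S). rewrite restrict_undo; [tauto|auto]. }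
  split.
  - intros HA. destruct (dec (Dt e (pkey th))) as [Dj|nD]; [|apply Hno; auto].
    exfalso. apply (step_fresh S). unfold cE in HA.
    assert (In (pkey th) (keys (cfgt e))).
    { unfold cfgt. apply keys_restrict. split; auto. pose proof F as [_ Hf].
      unfold kend; rewrite Hf. apply (@Dt_keys e _ F Dj). }
    rewrite <- HA in H. apply keys_restrict in H. tauto.
  - intros HB nA. destruct (dec (Dt e (pkey th))) as [Dj|nD]; [|exfalso; apply nA, Hno; auto].
    destruct e as [Pe the f Qe]. destruct F as [Se Hf]. simpl in Hf. subst f.
    unfold is_trans in Se; simpl in Se. simpl in Fe.
    unfold cE, cfgt, Dt, kend in *; simpl in *.
    set (D := down Qe (pkey the)) in *.
    assert (FQe : FR Qe) by (eapply FR_step; eauto).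
    assert (Dcl : forall x y, ord Qe x y -> D y -> D x).
    { intros x y Ho Dy. unfold D, down in *. eapply rt_trans; [apply rt_step|]; eauto. }
    assert (Gd : good (restrict D Qe)) by (apply good_restrict; auto; apply FR_good; auto).
    assert (Ejk : pkey th = pkey the).
    { destruct (PeanoNat.Nat.eq_dec (pkey th) (pkey the)) as [|ne]; auto. exfalso.
      pose proof Dj as Dj'. unfold D, down in Dj. apply clos_rt_rt1n in Dj. inversion Dj; subst; [auto|].
      assert (Dy : D y) by (unfold D, down; apply clos_rt1n_rt; auto).
      assert (Ho : ord (restrict D Qe) (pkey th) y) by (apply ord_restrict; auto).
      rewrite <- HB in Ho. apply ord_restrict in Ho. exact (step_max S y (proj1 Ho)). }
    assert (DclB : forall x y, ord B x y -> D y -> D x).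
    { intros x y Ho Dy. rewrite <- HB in Gd. eapply good_restrict_ord; eauto. }
    destruct (@canon (length (keys B)) A th B D (le_n _) FA S DclB) as [C1 C2]; [rewrite Ejk; apply rt_refl|].
    destruct (@canon (length (keys Qe)) Pe the Qe D (le_n _) Fe Se Dcl) as [C3 C4]; [apply rt_refl|].
    assert (EA : restrict D A = restrict D Pe).
    { rewrite <- (step_undo S), <- (step_undo Se). rewrite Ejk. unfold undo.
      rewrite !restrict_restrict.
      rewrite !restrict_and_comm. rewrite HB. auto. }
    rewrite EA, HB in C1, C2.
    pose proof (step_det C3 C1) as Eth. subst th.
    unfold in_ev, ev_eq. eapply rst_trans; [apply C2|]. apply rst_sym. apply C4.
Qed.

Lemma in_ev_tinv s e : in_ev (tinv s) e -> in_ev s (tinv e).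
Proof. intros H. apply ev_eq_tinv in H. rewrite tinv_tinv in H. exact H. Qed.

Lemma Lstep e t : fwd_event_rep e -> is_trans t -> FR (tsrc t) -> FR (tsrc e) ->
  (in_ev t e -> ~ cE e (tsrc t) /\ cE e (ttgt t)) /\
  (in_ev t (tinv e) -> cE e (tsrc t) /\ ~ cE e (ttgt t)) /\
  (~ in_ev t e -> ~ in_ev t (tinv e) -> (cE e (tsrc t) <-> cE e (ttgt t))).
Proof.
  intros F It Ft Fe. pose proof (cfg_has_k F) as Kc.
  destruct e as [Pe the f Qe]. pose proof F as [Se Hf]. simpl in Hf. subst f.
  destruct t as [A th g B]. unfold is_trans in It; simpl in *.
  split; [|split].
  - intros Hin. destruct (ev_eq_Inv Hin) as (E1 & E2 & E3 & E4). simpl in E1, E2. subst.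
    unfold cE. split.
    + intros HA. rewrite <- HA in Kc. apply keys_restrict in Kc. apply (step_fresh It). tauto.
    + rewrite <- E4. unfold cfgt, kend; simpl. apply restrict_ext. intros x; rewrite E3; tauto.
  - intros Hin. destruct (ev_eq_Inv Hin) as (E1 & E2 & E3 & E4). unfold tinv in *. simpl in E1, E2, E3, E4. subst.
    unfold cE. unfold cfgt, Dt, kend in *; simpl in *. split.
    + rewrite <- E4. apply restrict_ext. intros x; rewrite E3; tauto.
    + intros HB. rewrite <- HB in Kc. apply keys_restrict in Kc. apply (step_fresh It). tauto.
  - intros n1 n2. destruct g.
    + destruct (Lfwd F Ft Fe It) as [L1 L2]. split; auto.
      intros HB. apply NNPP. intros nA. apply n1. apply L2; auto.
    + assert (FB : FR B) by (eapply FR_back; eauto).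
      destruct (Lfwd F FB Fe It) as [L1 L2]. split; auto.
      intros HA. apply NNPP. intros nB. apply n2. apply in_ev_tinv. apply L2; auto.
Qed.

Lemma L8 e : fwd_event_rep e -> FR (tsrc e) -> forall A r B, path A r B -> FR A ->
  forall z, sharp r e z -> z = (ind (cE e B) - ind (cE e A))%Z.
Proof.
  intros F Fe A r B P. induction P; intros FA z Sh.
  - inversion Sh; subst. lia.
  - assert (Ft : FR (ttgt t)) by (apply (is_trans_FR _ H); auto).
    destruct (@Lstep e t F H FA Fe) as (L1 & L2 & L3).
    inversion Sh; subst.
    + specialize (IHP Ft _ H5). destruct (L1 H2). unfold ind in *.
      destruct (dec (cE e (ttgt t))), (dec (cE e (tsrc t))); try tauto; lia.
    + specialize (IHP Ft _ H6). destruct (L2 H3). unfold ind in *.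
      destruct (dec (cE e (ttgt t))), (dec (cE e (tsrc t))); try tauto; lia.
    + specialize (IHP Ft _ H6). specialize (L3 H2 H3). unfold ind in *.
      destruct (dec (cE e (ttgt t))), (dec (cE e (tsrc t))); try tauto; lia.
Qed.

Lemma not_cE_std e P : fwd_event_rep e -> keys P = [] -> ~ cE e P.
Proof. intros F H C. pose proof (cE_keys F C). rewrite H in H0; auto. Qed.

Lemma L8root e P r B z : fwd_event_rep e -> FR (tsrc e) -> path P r B -> keys P = [] ->
  sharp r e z -> z = ind (cE e B).
Proof.
  intros F Fe Pth HP Sh. rewrite (L8 F Fe Pth (FR_std _ HP) Sh).
  unfold ind at 2. destruct (dec (cE e P)); [exfalso; eapply not_cE_std; eauto|]. lia.
Qed.

Lemma sharp_exists r e : exists z, sharp r e z.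
Proof.
  induction r as [|s r [z IH]].
  - exists 0%Z. constructor.
  - destruct (classic (in_ev s e)).
    + exists (z + 1)%Z. constructor; auto.
    + destruct (classic (in_ev s (tinv e))).
      * exists (z - 1)%Z. constructor; auto.
      * exists z. constructor; auto.
Qed.

Lemma sharp_pos_in r e z : sharp r e z -> (0 < z)%Z -> exists s, In s r /\ in_ev s e.
Proof.
  induction 1; intros Hz.
  - lia.
  - exists s; simpl; auto.
  - destruct IHsharp as [s' [H2 H3]]; [lia|]. exists s'; simpl; auto.
  - destruct IHsharp as [s' [H2 H3]]; [lia|]. exists s'; simpl; auto.
Qed.

Lemma ind_pos P : (0 < ind P)%Z -> P.
Proof. unfold ind. destruct (dec P); auto; lia. Qed.

Lemma in_evX_cE X e : FR X -> fwd_event_rep e -> in_evX X e -> FR (tsrc e) /\ cE e X.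
Proof.
  intros FX F (P & r & Rt & Pth & z & Sh & Hz).
  destruct (path_FR Pth) as [I1 I2].
  assert (FP : FR P) by tauto.
  pose proof (FR_rooted FP Rt) as HP.
  destruct (sharp_pos_in Sh Hz) as (s & Hs & Hin).
  assert (Fe : FR (tsrc e)).
  { apply (ev_eq_FR Hin). apply (I2 s Hs). auto. }
  split; auto. rewrite (L8root F Fe Pth HP Sh) in Hz. apply ind_pos; auto.
Qed.

Lemma Lcfg e X : fwd_event_rep e -> FR (tsrc e) -> cE e X ->
  forall x, Dt e x <-> down X (pkey (tlab e)) x.
Proof.
  intros F Fe C.
  destruct e as [Pe the f Qe]. pose proof F as [Se Hf]. simpl in Hf. subst f.
  unfold is_trans in Se; simpl in *.
  unfold cE, cfgt, Dt, kend in *; simpl in *.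
  set (D := down Qe (pkey the)) in *.
  assert (FQe : FR Qe) by (eapply FR_step; eauto).
  assert (Dcl : forall x y, ord Qe x y -> D y -> D x).
  { intros x y Ho Dy. unfold D, down in *. eapply rt_trans; [apply rt_step|]; eauto. }
  assert (Gd : good (restrict D Qe)) by (apply good_restrict; auto; apply FR_good; auto).
  intros x; split.
  - intros Hx. pose proof Hx as Hx'. unfold D, down in Hx. apply clos_rt_rt1n in Hx.
    unfold down. induction Hx.
    + apply rt_refl.
    + assert (Dy : D y) by (unfold D, down; apply clos_rt1n_rt; auto).
      assert (Ho : ord (restrict D Qe) x y) by (apply ord_restrict; auto).
      rewrite <- C in Ho. apply ord_restrict in Ho.
      eapply rt_trans; [apply rt_step; apply Ho|]. apply IHHx; auto.
  - assert (GdX : good (restrict D X)) by (rewrite C; auto).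
    unfold down. intros Hx. apply clos_rt_rt1n in Hx. clear Gd. induction Hx.
    + apply rt_refl.
    + eapply good_restrict_ord; [exact GdX|exact H|]. apply IHHx; auto.
Qed.

Lemma Lres : forall n X (D : key -> Prop), length (keys X) <= n -> FR X ->
  (forall x y, ord X x y -> D y -> D x) -> exists r, path X r (restrict D X).
Proof.
  induction n; intros X D Hl FX Hd;
  (destruct (classic (exists j, In j (keys X) /\ ~ D j)) as [(j0 & Hj0 & nD0)|Hno];
   [|rewrite (restrict_id D X);
      [exists []; constructor
      | intros x Hx; apply NNPP; intros nD; apply Hno; exists x; split; auto]]).
  - destruct (keys X); simpl in *; [destruct Hj0|lia].
  - destruct (max_lemma D FX Hd _ Hj0 nD0) as (j & Hj & nD & Hm).
    destruct (undo_lemma FX _ Hj Hm) as (thj & Ej & U1 & FU).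
    destruct (IHn (undo X j) D) as [r Hr]; auto.
    + assert (NN : ~ (fun x => x <> j) j) by (simpl; tauto).
      pose proof (@len_restrict_lt (fun x => x <> j) X j Hj NN).
      unfold undo. lia.
    + intros x y Ho. apply Hd. unfold undo in Ho. apply ord_restrict in Ho. tauto.
    + rewrite restrict_undo in Hr by auto.
      exists (Tr X thj false (undo X j) :: r).
      apply (@path_cons (Tr X thj false (undo X j)) r _); simpl; auto.
Qed.

Unset Implicit Arguments.

Theorem theorem6p15 :
  forall (X : proc) (e1 e2 : trans),
    reachable X ->
    fwd_event_rep e1 -> fwd_event_rep e2 ->
    in_evX X e1 -> in_evX X e2 ->
    (ev_le e1 e2 <-> le_X X (ev_key e1) (ev_key e2)).
Proof.
  intros X e1 e2 HX F1 F2 I1 I2.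
  pose proof (reach_FR HX) as FX.
  destruct (in_evX_cE FX F1 I1) as [Fe1 C1].
  destruct (in_evX_cE FX F2 I2) as [Fe2 C2].
  pose proof (Lcfg F1 Fe1 C1) as D1.
  pose proof (Lcfg F2 Fe2 C2) as D2.
  unfold ev_key, le_X.
  split.
  - intros Hle.
    split; [apply (cE_keys F1 C1)|]. split; [apply (cE_keys F2 C2)|].
    apply NNPP. intros Nd.
    assert (nD : ~ Dt e2 (pkey (tlab e1))) by (rewrite D2; auto).
    assert (Hd : forall x y, ord X x y -> Dt e2 y -> Dt e2 x).
    { intros x y Ho Dy. apply D2. apply D2 in Dy. unfold down in *.
      eapply rt_trans; [apply rt_step|]; eauto. }
    destruct (@Lres (length (keys X)) X (Dt e2) (le_n _) FX Hd) as [r1 Hr1].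
    destruct (FR_path FX) as (P & r0 & HP & Hr0).
    pose proof (path_app Hr0 Hr1) as Pth.
    set (B := restrict (Dt e2) X) in *.
    assert (CB2 : cE e2 B).
    { unfold cE, B. rewrite restrict_restrict. rewrite <- C2. unfold cE. apply restrict_ext. tauto. }
    assert (Rt : rooted_path (r0 ++ r1)).
    { exists P, B. split; auto. apply std_rooted; auto. }
    destruct (sharp_exists (r0 ++ r1) e2) as [z2 Sh2].
    assert (SP : sharp_pos (r0 ++ r1) e2).
    { exists z2. split; auto. rewrite (L8root F2 Fe2 Pth HP Sh2). unfold ind.
      destruct (dec (cE e2 B)); [lia|tauto]. }
    destruct (Hle _ Rt SP) as (z1 & Sh1 & Hz1).
    rewrite (L8root F1 Fe1 Pth HP Sh1) in Hz1. apply ind_pos in Hz1.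
    apply (cE_keys F1) in Hz1. unfold B in Hz1. apply keys_restrict in Hz1. tauto.
  - intros (K1 & K2 & Hk).
    intros r (P & B & Pth & Rt) (z & Sh & Hz).
    destruct (sharp_pos_in Sh Hz) as (s & Hs & Hin).
    destruct (path_FR Pth) as [J1 J2].
    assert (FP : FR P) by (apply (J2 s Hs); apply (ev_eq_FR Hin); auto).
    pose proof (FR_rooted FP Rt) as HP.
    rewrite (L8root F2 Fe2 Pth HP Sh) in Hz. apply ind_pos in Hz.
    assert (Sub : forall x, Dt e1 x -> Dt e2 x).
    { intros x Hx. apply D2. apply D1 in Hx. unfold down in *. eapply rt_trans; eauto. }
    assert (CB1 : cE e1 B).
    { unfold cE in *. rewrite <- C1.
      rewrite (restrict_ext (Dt e1) (fun x => Dt e1 x /\ Dt e2 x)) by (intros x; split; auto; tauto).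
      rewrite (restrict_ext (Dt e1) (fun x => Dt e1 x /\ Dt e2 x) X) by (intros x; split; auto; tauto).
      rewrite <- !restrict_restrict. rewrite Hz, C2.
      rewrite <- C2. auto. }
    destruct (sharp_exists r e1) as [z1 Sh1].
    exists z1. split; auto. rewrite (L8root F1 Fe1 Pth HP Sh1). unfold ind.
    destruct (dec (cE e1 B)); [lia|tauto].
Qed.
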